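(* Let $(H,L_H)$ be a right-resolving labeled graph presenting a sofic shift $Y$. Then $(H,L_H)$ is regular if and only if the set $\mathcal R(L_H)$ of regular rays is dense in $X_H$.
   Context: A labeled graph $(H,L_H)$: finite directed graph (vertices $V_H$, edges $E_H$, source/terminal maps $s_H,t_H$) without sinks or sources, labeling $L_H:E_H\to A$, edge shift $X_H$; $L_H$ acts coordinatewise; $Y=L_H(X_H)$. Right-resolving: distinct edges with the same source have distinct labels. $f_H(v)=\{L_H(x): x$ a right-infinite path starting at $v\}$; for $y\in Y$, $F(y)=\{w\in Y[0,\infty): y_{(-\infty,-1]}w\in Y\}$ with $Y[0,\infty)=\{y_{[0,\infty)}:y\in Y\}$. A vertex $v$ is regular if there is $z\in X_H$ whose edge $z_{-1}$ ends at $v$ with $f_H(v)=F(L_H(z))$; $(H,L_H)$ is regular if all vertices are regular. For $x\in X_H$, $\mathbb U(x)=\{z\in X_H:\exists N\ \forall i\le N,\ z_i=x_i\}$ (similarly in $Y$); $x$ is a regular ray if $L_H$ maps $\mathbb U(x)$ onto $\mathbb U(L_H(x))$; $\mathcal R(L_H)$ is the set of regular rays. *)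

(* Defs.v *)
From mathcomp Require Import all_boot.
From Stdlib Require Import ZArith.
Set Implicit Arguments. Unset Strict Implicit. Unset Printing Implicit Defensive.
Local Open Scope Z_scope.

Section LabeledGraph.
Variables (V E : finType) (s t : E -> V) (A : Type) (L : E -> A).

Definition no_sinks_sources : Prop :=
  forall v : V, (exists e, s e = v) /\ (exists e, t e = v).

Definition right_resolving : Prop :=
  forall e e' : E, s e = s e' -> L e = L e' -> e = e'.

Definition XH (x : Z -> E) : Prop := forall i : Z, t (x i) = s (x (i + 1)).

Definition Lmap (x : Z -> E) : Z -> A := fun i => L (x i).

Definition Yshift (y : Z -> A) : Prop :=
  exists x, XH x /\ forall i, y i = Lmap x i.

Definition Yright (w : nat -> A) : Prop :=
  exists y, Yshift y /\ forall n : nat, w n = y (Z.of_nat n).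

Definition fH (v : V) (w : nat -> A) : Prop :=
  exists p : nat -> E, s (p 0%nat) = v /\
    (forall n : nat, t (p n) = s (p n.+1)) /\
    forall n : nat, w n = L (p n).

Definition glue (y : Z -> A) (w : nat -> A) : Z -> A :=
  fun i => if i <? 0 then y i else w (Z.to_nat i).

Definition Ffol (y : Z -> A) (w : nat -> A) : Prop :=
  Yright w /\ Yshift (glue y w).

Definition regular_vertex (v : V) : Prop :=
  exists z, XH z /\ t (z (-1)) = v /\
    forall w, fH v w <-> Ffol (Lmap z) w.

Definition regular_graph : Prop := forall v : V, regular_vertex v.

Definition UX (x : Z -> E) (z : Z -> E) : Prop :=
  XH z /\ exists N : Z, forall i, i <= N -> z i = x i.

Definition UY (y : Z -> A) (y' : Z -> A) : Prop :=
  Yshift y' /\ exists N : Z, forall i, i <= N -> y' i = y i.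

Definition regular_ray (x : Z -> E) : Prop :=
  XH x /\ forall y', UY (Lmap x) y' -> exists z, UX x z /\ forall i, Lmap z i = y' i.

(* Density in X_H for the product topology (cylinder sets form a basis). *)
Definition dense_in_XH (S : (Z -> E) -> Prop) : Prop :=
  forall x, XH x -> forall n : nat, exists z, S z /\ XH z /\
    forall i : Z, - Z.of_nat n <= i <= Z.of_nat n -> z i = x i.

End LabeledGraph.

(* Main.v *)
Require Import Defs.
From mathcomp Require Import all_boot.
From Stdlib Require Import ZArith Lia Classical ClassicalEpsilon.
From mathcomp Require Import zify.

Open Scope Z_scope.

Section Proof.
Variables (V E : finType) (s t : E -> V) (A : Type) (L : E -> A).
Hypothesis hss : no_sinks_sources s t.
Hypothesis hrr : right_resolving s L.

Definition Good (x : Z -> E) (N : Z) : Prop :=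
  forall z, XH s t z -> (forall i, i <= N -> L (z i) = L (x i)) ->
  exists p, XH s t p /\ (forall i, i <= N -> p i = x i) /\ (forall i, L (p i) = L (z i)).

Lemma rr_ext (a b : Z -> E) (M N : Z) : XH s t a -> XH s t b ->
  (forall i, i <= M -> a i = b i) -> (forall i, i <= N -> L (a i) = L (b i)) ->
  forall i, i <= N -> a i = b i.
Proof.
  intros Ha Hb HM HN.
  assert (H: forall k : nat, forall i, i <= M + Z.of_nat k -> i <= N -> a i = b i).
  { induction k as [|k IH]; intros i Hi HiN.
    - apply HM; lia.
    - destruct (Z_le_gt_dec i (M + Z.of_nat k)) as [h|h]; [apply IH; lia|].
      apply hrr; [| apply HN; lia].
      replace i with (i - 1 + 1) by lia. rewrite -(Ha (i-1)) -(Hb (i-1)). f_equal. apply IH; lia. }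
  intros i Hi. destruct (Z_le_gt_dec i M) as [h|h]; [apply HM; lia|].
  apply (H (Z.to_nat (i - M))); lia.
Qed.

Lemma good_succ x N : XH s t x -> Good x N -> Good x (N+1).
Proof.
  intros Hx G z Hz Hl.
  destruct (G z Hz) as [p [Hp [Hpx HpL]]]. { intros i hi; apply Hl; lia. }
  exists p; split; [auto|split; [|auto]].
  apply (rr_ext p x N (N+1) Hp Hx Hpx). intros i hi. rewrite HpL. apply Hl; lia.
Qed.

Lemma good_mono x N N' : XH s t x -> Good x N -> N <= N' -> Good x N'.
Proof.
  intros Hx G hle.
  assert (H : forall k : nat, Good x (N + Z.of_nat k)).
  { induction k as [|k IH]. - replace (N + Z.of_nat 0) with N by lia; auto.
    - replace (N + Z.of_nat k.+1) with (N + Z.of_nat k + 1) by lia. apply good_succ; auto. }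
  replace N' with (N + Z.of_nat (Z.to_nat (N' - N))) by lia. apply H.
Qed.

Lemma good_ext x x' N : (forall i, i <= N -> x i = x' i) -> Good x N -> Good x' N.
Proof.
  intros Ex G z Hz Hl.
  destruct (G z Hz) as [p [Hp [Hpx HpL]]].
  { intros i hi. rewrite (Ex i hi). apply Hl; auto. }
  exists p; split; [auto|split; [|auto]].
  intros i hi. rewrite (Hpx i hi). apply Ex; auto.
Qed.

Lemma XH_shift x c : XH s t x -> XH s t (fun i => x (i + c)).
Proof.
  intros H i. simpl. rewrite H. f_equal. f_equal. lia.
Qed.

Lemma good_shift x c N N' : Good x N -> N' = N - c -> Good (fun i => x (i + c)) N'.
Proof.
  intros G hN z Hz Hl.
  pose z2 := fun i => z (i + - c).
  have Hz2 : XH s t z2 := XH_shift z (-c) Hz.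
  destruct (G z2 Hz2) as [p [Hp [Hpx HpL]]].
  { intros i hi. unfold z2. rewrite (Hl (i + -c)); [|lia]. f_equal; f_equal; lia. }
  exists (fun i => p (i + c)). split; [apply XH_shift; auto|split].
  - intros i hi. apply Hpx; lia.
  - intros i. rewrite HpL. unfold z2. f_equal; f_equal; lia.
Qed.

Definition join (a b : Z -> E) (m : Z) : Z -> E := fun i => if i <=? m then a i else b i.

Lemma join_le a b m i : i <= m -> join a b m i = a i.
Proof. intros h; unfold join. by rewrite (proj2 (Z.leb_le _ _) h). Qed.

Lemma join_gt a b m i : m < i -> join a b m i = b i.
Proof. intros h; unfold join. by rewrite (proj2 (Z.leb_gt _ _) h). Qed.

Lemma XH_join a b m : (forall i, i < m -> t (a i) = s (a (i+1))) -> t (a m) = s (b (m+1)) ->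
  (forall i, m < i -> t (b i) = s (b (i+1))) -> XH s t (join a b m).
Proof.
  intros H1 H2 H3 i.
  destruct (Z_le_gt_dec (i+1) m) as [h|h].
  - rewrite !join_le; try lia. apply H1; lia.
  - destruct (Z_le_gt_dec i m) as [h'|h'].
    + assert (i = m) by lia; subst. rewrite join_le; [|lia]. rewrite join_gt; [|lia]. auto.
    + rewrite !join_gt; try lia. apply H3; lia.
Qed.

Definition emb (pp : nat -> E) (m : Z) : Z -> E := fun i => pp (Z.to_nat (i - m - 1)).

Lemma emb_chain pp m : (forall n, t (pp n) = s (pp n.+1)) ->
  forall i, m < i -> t (emb pp m i) = s (emb pp m (i+1)).
Proof.
  intros H i hi; unfold emb. rewrite H. f_equal; f_equal. lia.
Qed.

Lemma emb_first pp m : emb pp m (m+1) = pp 0%nat.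
Proof. unfold emb. by replace (m + 1 - m - 1) with 0 by lia. Qed.

Lemma emb_nat pp m (n : nat) : emb pp m (m + 1 + Z.of_nat n) = pp n.
Proof. unfold emb. f_equal. lia. Qed.

Lemma XH_join_emb a pp m : XH s t a -> t (a m) = s (pp 0%nat) ->
  (forall n, t (pp n) = s (pp n.+1)) -> XH s t (join a (emb pp m) m).
Proof.
  intros Ha H0 Hc. apply XH_join.
  - intros i _; apply Ha.
  - by rewrite emb_first.
  - apply emb_chain; auto.
Qed.

Lemma dom_of_good q M x'' : XH s t q -> Good q M -> XH s t x'' ->
  (forall i, i <= M -> L (x'' i) = L (q i)) ->
  forall w, fH s t L (t (x'' M)) w -> fH s t L (t (q M)) w.
Proof.
  intros Hq G Hx Hl w [pp [H0 [Hc Hw]]].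
  pose z := join x'' (emb pp M) M.
  have Hz : XH s t z by apply XH_join_emb.
  destruct (G z Hz) as [p [Hp [Hpq HpL]]].
  { intros i hi; unfold z. rewrite join_le; auto. }
  exists (fun n => p (M + 1 + Z.of_nat n)). split; [|split].
  - simpl. replace (M + 1 + 0) with (M+1) by lia. rewrite -(Hp M) (Hpq M (Z.le_refl M)). done.
  - intros n. rewrite Hp. f_equal; f_equal; lia.
  - intros n. rewrite Hw HpL. unfold z. rewrite join_gt; [|lia]. by rewrite emb_nat.
Qed.

Lemma good_of_dom Q N : XH s t Q ->
  (forall z, XH s t z -> (forall i, i <= N -> L (z i) = L (Q i)) ->
     forall w, fH s t L (t (z N)) w -> fH s t L (t (Q N)) w) -> Good Q N.
Proof.
  intros HQ Hd z Hz Hl.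
  pose w := fun n : nat => L (z (N + 1 + Z.of_nat n)).
  have Hw : fH s t L (t (z N)) w.
  { exists (fun n => z (N + 1 + Z.of_nat n)). split; [|split].
    - simpl. replace (N + 1 + 0) with (N+1) by lia. by rewrite Hz.
    - intros n. rewrite Hz. f_equal; f_equal; lia.
    - intros n; reflexivity. }
  destruct (Hd z Hz Hl w Hw) as [pp [H0 [Hc Hpw]]].
  exists (join Q (emb pp N) N). split; [apply XH_join_emb; auto|split].
  - intros i hi; apply join_le; auto.
  - intros i. destruct (Z_le_gt_dec i N) as [h|h].
    + rewrite join_le; auto. symmetry; apply Hl; auto.
    + rewrite join_gt; [|lia]. unfold emb. rewrite -Hpw. unfold w. f_equal; f_equal; lia.
Qed.

Lemma glue_emb_lab (z z2 : Z -> E) pp w :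
  (forall i, i <= -1 -> L (z2 i) = L (z i)) -> (forall n, w n = L (pp n)) ->
  forall i, glue (Lmap L z) w i = Lmap L (join z2 (emb pp (-1)) (-1)) i.
Proof.
  intros Hl Hw i. unfold glue, Lmap. destruct (Z.ltb_spec i 0) as [h|h].
  - rewrite join_le; [|lia]. symmetry; apply Hl; lia.
  - rewrite join_gt; [|lia]. unfold emb. rewrite Hw. f_equal; f_equal; lia.
Qed.

Lemma ffol_of_path (z z2 : Z -> E) pp w : XH s t z2 ->
  (forall i, i <= -1 -> L (z2 i) = L (z i)) ->
  s (pp 0%nat) = t (z2 (-1)) -> (forall n, t (pp n) = s (pp n.+1)) ->
  (forall n, w n = L (pp n)) -> Ffol s t L (Lmap L z) w.
Proof.
  intros Hz2 Hl H0 Hc Hw.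
  have Hp : XH s t (join z2 (emb pp (-1)) (-1)) by apply XH_join_emb.
  split.
  - exists (glue (Lmap L z) w). split.
    + exists (join z2 (emb pp (-1)) (-1)). split; auto. apply glue_emb_lab; auto.
    + intros n. unfold glue. rewrite (proj2 (Z.ltb_ge _ _)); [|lia]. by rewrite Nat2Z.id.
  - exists (join z2 (emb pp (-1)) (-1)). split; auto. apply glue_emb_lab; auto.
Qed.

Lemma witness v : regular_vertex s t L v -> exists z, XH s t z /\ t (z (-1)) = v /\ Good z (-1).
Proof.
  intros [z [Hz [Hv HF]]]. exists z; split; auto; split; auto.
  apply good_of_dom; auto. intros z2 Hz2 Hl w [pp [H0 [Hc Hw]]].
  rewrite Hv. apply HF. apply (ffol_of_path z z2 pp); auto.
Qed.

Lemma unif_bound (T : finType) (R : T -> Z -> Prop) :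
  (forall a m m', m' <= m -> R a m -> R a m') -> (forall a, exists m, R a m) ->
  exists m, forall a, R a m.
Proof.
  intros Hmono Hex.
  assert (H : forall l : seq T, exists m, forall a, a \in l -> R a m).
  { elim=> [|a l [m Hm]].
    - exists 0; intros a. by rewrite in_nil.
    - destruct (Hex a) as [ma Ha]. exists (Z.min m ma). intros b. rewrite in_cons.
      case/orP => [/eqP -> | hb].
      + apply (Hmono a ma); [lia|auto].
      + apply (Hmono b m); [lia|auto]. }
  destruct (H (enum T)) as [m Hm]. exists m. intros a. apply Hm. by rewrite mem_enum.
Qed.

Definition Pk (y : Z -> A) (j : Z) (w : V) := forall M0, M0 <= j ->
  exists x', XH s t x' /\ (forall i, M0 <= i <= j -> L (x' i) = y i) /\ t (x' j) = w.

Lemma konig_step y j w : Pk y j w -> exists e, t e = w /\ L e = y j /\ Pk y (j-1) (s e).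
Proof.
  intros HP. apply NNPP; intros Hno.
  assert (Hb : exists M, forall e, t e = w -> L e = y j -> ~ (exists x', XH s t x' /\
     (forall i, M <= i <= j-1 -> L (x' i) = y i) /\ t (x' (j-1)) = s e)).
  { apply unif_bound with (R := fun e M => t e = w -> L e = y j -> ~ (exists x', XH s t x' /\
     (forall i, M <= i <= j-1 -> L (x' i) = y i) /\ t (x' (j-1)) = s e)).
    - intros e m m' hle h ht hl [x' [hx [hlab hend]]]. apply (h ht hl).
      exists x'; split; auto; split; auto. intros i hi; apply hlab; lia.
    - intros e. destruct (classic (t e = w /\ L e = y j)) as [[ht hl]|hn].
      + assert (H : ~ Pk y (j-1) (s e)) by (intros hp; apply Hno; exists e; auto).
        unfold Pk in H. apply not_all_ex_not in H. destruct H as [M0 H].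
        apply imply_to_and in H. destruct H as [hle hne].
        exists M0. intros _ _. exact hne.
      + exists 0. intros ht hl; exfalso; apply hn; auto. }
  destruct Hb as [M Hb].
  destruct (HP (Z.min M (j-1))) as [x' [hx [hlab hend]]]; [lia|].
  apply (Hb (x' j) hend); [apply hlab; lia|].
  exists x'; split; auto; split.
  - intros i hi; apply hlab; lia.
  - rewrite (hx (j-1)). f_equal; f_equal; lia.
Qed.

Lemma konig y N u : Pk y N u -> exists x'', XH s t x'' /\ (forall i, i <= N -> L (x'' i) = y i) /\ t (x'' N) = u.
Proof.
  intros HP.
  destruct (HP N (Z.le_refl N)) as [x0 _].
  have inh : inhabited E := inhabits (x0 0).
  pose g := fun j w => epsilon inh (fun e => t e = w /\ L e = y j /\ Pk y (j-1) (s e)).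
  have Hg : forall j w, Pk y j w -> t (g j w) = w /\ L (g j w) = y j /\ Pk y (j-1) (s (g j w)).
  { intros j w h. apply (epsilon_spec inh (fun e => t e = w /\ L e = y j /\ Pk y (j-1) (s e))).
    apply konig_step; auto. }
  pose nxt := fun v => epsilon inh (fun e => s e = v).
  have Hnxt : forall v, s (nxt v) = v.
  { intros v. apply (epsilon_spec inh (fun e => s e = v)). apply (proj1 (hss v)). }
  pose fw := fix fw (k : nat) : E := match k with O => nxt u | S k => nxt (t (fw k)) end.
  have Hfw : forall k, t (fw k) = s (fw k.+1) by intros k; simpl; rewrite Hnxt.
  pose ws := fix ws (k : nat) : V := match k with O => u | S k => s (g (N - Z.of_nat k) (ws k)) end.
  pose es := fun k => g (N - Z.of_nat k) (ws k).
  have Hinv : forall k, Pk y (N - Z.of_nat k) (ws k).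
  { induction k as [|k IH]. - simpl. by replace (N - 0) with N by lia.
    - change (ws k.+1) with (s (g (N - Z.of_nat k) (ws k))).
      replace (N - Z.of_nat k.+1) with (N - Z.of_nat k - 1) by lia.
      apply (proj2 (proj2 (Hg _ _ IH))). }
  have Hes : forall k, t (es k) = ws k /\ L (es k) = y (N - Z.of_nat k).
  { intros k. destruct (Hg _ _ (Hinv k)) as [h1 [h2 _]]. split; auto. }
  exists (join (fun i => es (Z.to_nat (N - i))) (emb fw N) N). split; [|split].
  - apply XH_join.
    + intros i hi. rewrite (proj1 (Hes _)).
      replace (Z.to_nat (N - i)) with (Z.to_nat (N - (i + 1))).+1 by lia. simpl. reflexivity.
    + rewrite emb_first. simpl. rewrite Hnxt. replace (N - N) with 0 by lia. simpl.
      apply (proj1 (Hes 0%nat)).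
    + apply emb_chain; auto.
  - intros i hi. rewrite join_le; auto. rewrite (proj2 (Hes _)). f_equal; lia.
  - rewrite join_le; [|lia]. replace (N - N) with 0 by lia. apply (proj1 (Hes 0%nat)).
Qed.

Definition Win q M M' := forall x', XH s t x' ->
  (forall i, M' < i <= M -> L (x' i) = L (q i)) ->
  forall w, fH s t L (t (x' M)) w -> fH s t L (t (q M)) w.

Lemma win_ex q M : XH s t q -> Good q M -> exists M', M' < M /\ Win q M M'.
Proof.
  intros Hq G.
  have [M1 HM1] : exists M1, forall u : V, (forall w, fH s t L u w -> fH s t L (t (q M)) w) \/
     (forall x', XH s t x' -> (forall i, M1 < i <= M -> L (x' i) = L (q i)) -> t (x' M) <> u).
  { apply unif_bound.
    - intros u m m' hle [h|h]; [left; auto| right]. intros x' hx hl. apply h; auto.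
      intros i hi; apply hl; lia.
    - intros u. destruct (classic (forall w, fH s t L u w -> fH s t L (t (q M)) w)) as [hd|hnd].
      + exists 0; left; auto.
      + assert (H : ~ Pk (Lmap L q) M u).
        { intros hp. destruct (konig _ _ _ hp) as [x'' [hx [hl he]]]. apply hnd. rewrite -he.
          apply (dom_of_good q M x'' Hq G hx). intros; apply hl; auto. }
        unfold Pk in H; apply not_all_ex_not in H. destruct H as [M0 H].
        apply imply_to_and in H. destruct H as [hle hne].
        exists (M0 - 1). right. intros x' hx hl he. apply hne. exists x'. split; auto. split; auto.
        intros i hi. apply hl; lia. }
  exists (Z.min M1 (M-1)). split; [lia|]. intros x' hx hl w hw.
  destruct (HM1 (t (x' M))) as [h|h]; [apply h; auto|].
  exfalso. apply (h x' hx); auto. intros i hi; apply hl; lia.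
Qed.

Lemma graft (hreg : regular_graph s t L) q m : XH s t q ->
  exists q', XH s t q' /\ Good q' m /\ forall i, m < i -> q' i = q i.
Proof.
  intros Hq.
  destruct (witness _ (hreg (t (q m)))) as [z [Hz [Hv Gz]]].
  pose a := fun i => z (i + (-1 - m)).
  exists (join a q m). split; [|split].
  - apply XH_join.
    + intros i _. apply (XH_shift z (-1 - m) Hz i).
    + unfold a. replace (m + (-1 - m)) with (-1) by lia. rewrite Hv. apply Hq.
    + intros i _; apply Hq.
  - apply good_ext with a. { intros i hi. by rewrite join_le. }
    apply (good_shift z (-1 - m) (-1)); auto. lia.
  - intros i hi. by rewrite join_gt.
Qed.

Lemma ray_of_good x : XH s t x -> (forall N, Good x N) -> regular_ray s t L x.
Proof.
  intros Hx HG. split; auto. intros y' [[z [Hz Hy]] [N HN]].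
  destruct (HG N z Hz) as [p [Hp [Hpx HpL]]].
  { intros i hi. have := Hy i; have := HN i hi; unfold Lmap; congruence. }
  exists p. split. { split; auto. exists N; auto. }
  intros i; unfold Lmap. rewrite HpL Hy. reflexivity.
Qed.

Lemma good_of_ray x : regular_ray s t L x -> forall N, Good x N.
Proof.
  intros [Hx Hr] N z Hz Hl.
  destruct (Hr (Lmap L z)) as [z' [[Hz' [M HM]] HL]].
  { split. exists z; split; auto. exists N. intros i hi; unfold Lmap; auto. }
  exists z'. split; auto. split.
  - apply (rr_ext z' x M N Hz' Hx HM). intros i hi. have := HL i; unfold Lmap; intros ->. apply Hl; auto.
  - intros i. apply HL.
Qed.

Lemma dense_of_reg (hreg : regular_graph s t L) : dense_in_XH s t (regular_ray s t L).
Proof.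
  intros x Hx n.
  pose m := - Z.of_nat n - 1.
  destruct (graft hreg x m Hx) as [q0 [Hq0 [Gq0 Eq0]]].
  pose Pp := fun p : (Z -> E) * Z => XH s t (fst p) /\ Good (fst p) (snd p).
  pose Rel := fun (p p' : (Z -> E) * Z) => snd p' < snd p /\
     (forall i, snd p' < i -> fst p' i = fst p i) /\ Win (fst p) (snd p) (snd p').
  have F : forall p : {p | Pp p}, {p' : {p | Pp p} | Rel (proj1_sig p) (proj1_sig p')}.
  { intros [[q M] [hq hg]]. apply constructive_indefinite_description. simpl in *.
    destruct (win_ex q M hq hg) as [M' [hlt hw]].
    destruct (graft hreg q M' hq) as [q' [hq' [hg' he]]].
    exists (exist Pp (q', M') (conj hq' hg')). simpl. unfold Rel; simpl. split; auto. }
  pose sq := fun k => Nat.iter k (fun p => proj1_sig (F p)) (exist Pp (q0, m) (conj Hq0 Gq0)).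
  pose qk := fun k => fst (proj1_sig (sq k)).
  pose Mk := fun k => snd (proj1_sig (sq k)).
  have HP : forall k, XH s t (qk k) /\ Good (qk k) (Mk k) := fun k => proj2_sig (sq k).
  have HR : forall k, Rel (proj1_sig (sq k)) (proj1_sig (sq k.+1)) := fun k => proj2_sig (F (sq k)).
  have HM : forall k, Mk k.+1 < Mk k := fun k => proj1 (HR k).
  have HE : forall k i, Mk k.+1 < i -> qk k.+1 i = qk k i := fun k => proj1 (proj2 (HR k)).
  have HW : forall k, Win (qk k) (Mk k) (Mk k.+1) := fun k => proj2 (proj2 (HR k)).
  have HM0 : forall k, Mk k <= m - Z.of_nat k.
  { induction k as [|k IH]. - unfold Mk, sq; simpl; lia. - have := HM k; lia. }
  have Hstab : forall j d i, Mk j < i -> qk (j + d)%nat i = qk j i /\ Mk (j + d)%nat <= Mk j.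
  { intros j d i h. induction d as [|d IH].
    - replace (j + 0)%nat with j by lia. split; [reflexivity|lia].
    - replace (j + d.+1)%nat with ((j + d).+1)%nat by lia. destruct IH as [IH1 IH2].
      have := HM (j + d)%nat. intros hh. split; [|lia]. rewrite HE; [auto|lia]. }
  have Hstab' : forall j j' i, (j <= j')%nat -> Mk j < i -> qk j' i = qk j i.
  { intros j j' i hj h. replace j' with (j + (j' - j))%nat by lia. apply (Hstab j _ i h). }
  pose Q := fun i => qk (Z.to_nat (m - i)).+1 i.
  have HQ : forall j i, Mk j < i -> Q i = qk j i.
  { intros j i h. unfold Q.
    have hK : Mk (Z.to_nat (m - i)).+1 < i by (have := HM0 (Z.to_nat (m - i)).+1; lia).
    destruct (Nat.le_ge_cases (Z.to_nat (m - i)).+1 j) as [h1|h1].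
    - symmetry. apply Hstab'; [lia|auto].
    - apply Hstab'; [lia|auto]. }
  have HXQ : XH s t Q.
  { intros i. have := HM0 (Z.to_nat (m - i)).+1. intros hb.
    rewrite (HQ (Z.to_nat (m - i)).+1 i); [|lia]. rewrite (HQ (Z.to_nat (m - i)).+1 (i+1)); [|lia].
    apply (proj1 (HP _)). }
  have HGQ : forall k, Good Q (Mk k).
  { intros k. apply (good_of_dom Q (Mk k) HXQ). intros z Hz Hl w Hw.
    have e1 : forall i, Mk k.+1 < i -> Q i = qk k i.
    { intros i hi. rewrite (HQ k.+1 i hi). apply HE; auto. }
    rewrite (e1 _ (HM k)).
    apply (HW k z Hz); [|exact Hw]. intros i hi. rewrite Hl; [|lia]. rewrite e1; [|lia]. reflexivity. }
  have HGall : forall N, Good Q N.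
  { intros N. apply good_mono with (Mk (Z.to_nat (m - N))); auto.
    have := HM0 (Z.to_nat (m - N)); lia. }
  exists Q. split; [apply ray_of_good; auto | split; auto].
  intros i hi. rewrite (HQ 0%nat i).
  - unfold qk, sq; simpl. apply Eq0. unfold m. lia.
  - unfold Mk, sq; simpl. unfold m. lia.
Qed.

Lemma reg_of_dense (hd : dense_in_XH s t (regular_ray s t L)) : regular_graph s t L.
Proof.
  intros v.
  destruct (proj1 (hss v)) as [e0 _].
  have inh : inhabited E := inhabits e0.
  pose nxt := fun v => epsilon inh (fun e => s e = v).
  have Hnxt : forall v, s (nxt v) = v.
  { intros v'. apply (epsilon_spec inh (fun e => s e = v')). apply (proj1 (hss v')). }
  pose prv := fun v => epsilon inh (fun e => t e = v).
  have Hprv : forall v, t (prv v) = v.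
  { intros v'. apply (epsilon_spec inh (fun e => t e = v')). apply (proj2 (hss v')). }
  pose fw := fix fw (k : nat) : E := match k with O => nxt v | S k => nxt (t (fw k)) end.
  have Hfw : forall k, t (fw k) = s (fw k.+1) by intros k; simpl; rewrite Hnxt.
  pose bw := fix bw (k : nat) : E := match k with O => prv v | S k => prv (s (bw k)) end.
  pose x := join (fun i => bw (Z.to_nat (- i - 1))) (emb fw (-1)) (-1).
  have Hx : XH s t x.
  { apply XH_join.
    - intros i hi. replace (Z.to_nat (- i - 1)) with (Z.to_nat (- (i + 1) - 1)).+1 by lia.
      simpl. apply Hprv.
    - rewrite emb_first. simpl. rewrite Hnxt. apply Hprv.
    - apply emb_chain; auto. }
  have Hx0 : s (x 0) = v.
  { unfold x. rewrite join_gt; [|lia]. unfold emb. simpl. apply Hnxt. }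
  destruct (hd x Hx 0%nat) as [z [Hray [Hz Hzx]]].
  have Gz := good_of_ray z Hray (-1).
  have Hv : t (z (-1)) = v.
  { rewrite (Hz (-1)). replace (-1 + 1) with 0 by lia. rewrite Hzx; [auto|lia]. }
  exists z. split; auto. split; auto. intros w. split.
  - intros [pp [H0 [Hc Hw]]]. apply (ffol_of_path z z pp); auto. rewrite Hv; auto.
  - intros [_ [xg [Hxg Hg]]].
    destruct (Gz xg Hxg) as [p [Hp [Hpz HpL]]].
    { intros i hi. have := Hg i. unfold glue, Lmap. rewrite (proj2 (Z.ltb_lt _ _)); [|lia]. auto. }
    exists (fun n => p (Z.of_nat n)). split; [|split].
    + simpl. rewrite -Hv -(Hpz (-1)); [|lia]. rewrite Hp. reflexivity.
    + intros n. rewrite Hp. f_equal; f_equal; lia.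
    + intros n. rewrite HpL. have := Hg (Z.of_nat n). unfold glue, Lmap.
      rewrite (proj2 (Z.ltb_ge _ _)); [|lia]. rewrite Nat2Z.id. auto.
Qed.

End Proof.

Theorem lemma3p11 (V E : finType) (s t : E -> V) (A : Type) (L : E -> A)
  (hss : no_sinks_sources s t) (hrr : right_resolving s L) :
  regular_graph s t L <-> dense_in_XH s t (regular_ray s t L).
Proof.
  split.
  - intros hreg. eapply dense_of_reg; eauto.
  - intros hd. eapply reg_of_dense; eauto.
Qed.
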